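(* For every $A>0$ there is a constant $C$ depending only on $A$ such that if $|c|\le A$, then every $C^1$ solution $U$ of $(1-x^2)U'+2xU+\frac12U^2=P_c(x)$ in $(-1,1)$ satisfies $|U(x)|\le C$ for all $-1<x<1$.
   Context: $c=(c_1,c_2,c_3)\in\mathbb{R}^3$ and $P_c(x):=c_1(1-x)+c_2(1+x)+c_3(1-x^2)$. *)

(* Defs.v *)
From Stdlib Require Import Reals.
From Coquelicot Require Import Coquelicot.
Open Scope R_scope.

Definition Pc (c1 c2 c3 x : R) : R :=
  c1 * (1 - x) + c2 * (1 + x) + c3 * (1 - x ^ 2).

Definition norm3 (c1 c2 c3 : R) : R := sqrt (c1 ^ 2 + c2 ^ 2 + c3 ^ 2).

Definition C1_on_open_interval (U U' : R -> R) : Prop :=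
  forall x, -1 < x < 1 -> is_derive U x (U' x) /\ continuous U' x.

(* Main.v *)
Require Import Defs.
From Stdlib Require Import Lra.
From Stdlib Require Import Reals Lra.
From Coquelicot Require Import Coquelicot.
Open Scope R_scope.

Lemma deriv_neg_left (f : R -> R) (m l a : R) :
  is_derive f m l -> l < 0 -> a < m -> exists y, a <= y < m /\ f m < f y.
Proof.
  intros Hd Hl Ham.
  apply is_derive_Reals in Hd.
  destruct (Hd (- l / 2)) as [d Hdel]; [lra|].
  pose (h := - Rmin (d / 2) (m - a)).
  assert (Hpos : 0 < Rmin (d/2) (m-a)) by (apply Rmin_pos; generalize (cond_pos d); lra).
  assert (Hle1 : Rmin (d/2) (m-a) <= d/2) by apply Rmin_l.
  assert (Hle2 : Rmin (d/2) (m-a) <= m-a) by apply Rmin_r.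
  assert (hn : h <> 0) by (unfold h; lra).
  assert (ha : Rabs h < d) by (unfold h; rewrite Rabs_Ropp, Rabs_pos_eq; generalize (cond_pos d); lra).
  specialize (Hdel h hn ha).
  exists (m + h). split; [unfold h; lra|].
  apply Rabs_def2 in Hdel. destruct Hdel as [H1 H2].
  assert (hneg : h < 0) by (unfold h; lra).
  pose (q := (f (m + h) - f m) / h).
  fold q in H1, H2.
  assert (Hq : f (m+h) - f m = q * h) by (unfold q; field; lra).
  assert (q < 0) by lra.
  nra.
Qed.

Lemma deriv_G (U U' : R -> R) t :
  -1 < t -> is_derive U t (U' t) -> U t <> 0 ->
  is_derive (fun s => / U s - ln (1 + s) / 8) t (- U' t / U t ^ 2 - / (8 * (1 + t))).
Proof.
  intros Ht Hd Hn.
  apply (is_derive_minus (fun s => / U s) (fun s => ln (1+s) / 8)).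
  - now apply is_derive_inv.
  - auto_derive. lra. field. lra.
Qed.

Lemma cont_of_deriv (U : R -> R) t l : is_derive U t l -> continuity_pt U t.
Proof. intros H; apply continuity_pt_filterlim; apply (ex_derive_continuous (V := R_NormedModule)); now exists l. Qed.

Lemma stays_above (U U' : R -> R) K x1 x0 :
  (forall t, -1<t<1 -> is_derive U t (U' t)) ->
  (forall t, -1<t<1 -> K < U t -> U' t < 0) ->
  -1 < x1 <= x0 -> x0 < 1 -> K < U x0 -> U x0 <= U x1.
Proof.
  intros Hd Hneg Hx1 Hx0 HK.
  destruct (Rle_or_lt (U x0) (U x1)) as [H|H]; auto. exfalso.
  destruct (continuity_ab_maj U x1 x0) as [m [Hm Hmr]]; [lra| |].
  { intros c Hc. apply (cont_of_deriv U c (U' c)). apply Hd. lra. }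
  assert (U x0 <= U m) by (apply Hm; lra).
  assert (x1 <> m) by (intro E; subst; lra).
  destruct (deriv_neg_left U m (U' m) x1) as [y [Hy1 Hy2]].
  - apply Hd; lra.
  - apply Hneg; lra.
  - lra.
  - assert (U y <= U m) by (apply Hm; lra). lra.
Qed.

Lemma upper_bound (M : R) (U U' : R -> R) : 0 <= M ->
  (forall x, -1<x<1 -> is_derive U x (U' x)) ->
  (forall x, -1<x<1 -> (1-x^2)*U' x + 2*x*U x + /2*(U x)^2 <= M) ->
  forall x, -1<x<1 -> U x <= 8 + M.
Proof.
  intros HM Hd Hode x0 Hx0.
  destruct (Rle_or_lt (U x0) (8 + M)) as [H|H]; auto. exfalso.
  set (K := 8 + M) in *.
  assert (HD : forall t, -1<t<1 -> K <= U t -> (1-t^2) * U' t <= - (U t)^2/4).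
  { intros t Ht HKt. specialize (Hode t Ht).
    set (u := U t) in *. set (v := U' t) in *.
    assert (0 < u) by (unfold K in HKt; lra).
    assert (0 <= (1+t) * u) by (apply Rmult_le_pos; lra).
    assert (u * (u / 4 - 2) - M >= 0).
    { assert (u / 4 - 2 >= M/4) by (unfold K in HKt; lra). nra. }
    assert (E1 : u * (u / 4 - 2) = u^2/4 - 2*u) by (unfold Rdiv; ring).
    assert (E2 : (1+t)*u = u + t*u) by ring.
    lra. }
  assert (HD' : forall t, -1<t<1 -> K < U t -> U' t < 0).
  { intros t Ht HKt. specialize (HD t Ht (Rlt_le _ _ HKt)).
    assert (0 < 1 - t^2) by nra. assert (0 < U t ^2) by (apply pow_lt; unfold K in HKt; lra).
    destruct (Rlt_or_le (U' t) 0) as [G|G]; auto.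
    assert (0 <= (1 - t^2) * U' t) by (apply Rmult_le_pos; lra). lra. }
  assert (Hst : forall t, -1 < t <= x0 -> U x0 <= U t).
  { intros t Ht. apply (stays_above U U' K t x0); auto; lra. }
  pose (T := 8 / K - ln (1 + x0) + 1).
  assert (HKp : 0 < K) by (unfold K; lra).
  assert (H8K : 0 < 8 / K) by (apply Rdiv_lt_0_compat; lra).
  pose (x := exp (- T) - 1).
  assert (Hxgt : -1 < x) by (unfold x; generalize (exp_pos (- T)); lra).
  assert (Hxlt : x < x0).
  { unfold x.
    assert (G : exp (- T) < exp (ln (1+x0))) by (apply exp_increasing; unfold T; lra).
    rewrite exp_ln in G by lra. lra. }
  assert (Hlnx : ln (1 + x) = - T) by (unfold x; replace (1 + (exp (- T) - 1)) with (exp (-T)) by ring; apply ln_exp).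
  destruct (MVT_gen (fun s => / U s - ln (1 + s) / 8) x x0
             (fun t => - U' t / U t ^ 2 - / (8 * (1 + t)))) as [c [Hc Heq]].
  - intros t Ht. rewrite Rmin_left in Ht by lra. rewrite Rmax_right in Ht by lra.
    apply deriv_G; try lra. apply Hd; lra.
    assert (U x0 <= U t) by (apply Hst; lra). lra.
  - intros t Ht. rewrite Rmin_left in Ht by lra. rewrite Rmax_right in Ht by lra.
    apply (cont_of_deriv _ t (- U' t / U t ^ 2 - / (8 * (1 + t)))).
    apply deriv_G; try lra. apply Hd; lra.
    assert (U x0 <= U t) by (apply Hst; lra). lra.
  - rewrite Rmin_left in Hc by lra. rewrite Rmax_right in Hc by lra.
    assert (Hc1 : -1 < c < 1) by lra.
    assert (HUc : U x0 <= U c) by (apply Hst; lra).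
    assert (HDc := HD c Hc1 ltac:(lra)).
    assert (Hder : 0 <= - U' c / U c ^ 2 - / (8 * (1 + c))).
    { set (u := U c) in *. set (v := U' c) in *.
      assert (0 < u) by lra.
      assert (0 < 1 + c) by lra. assert (0 < 1 - c) by lra.
      assert (E : - v / u ^ 2 - / (8 * (1 + c)) = (-8*(1+c)*v - u^2) / (8 * (1+c) * u^2)) by (field; lra).
      rewrite E. apply Rmult_le_pos.
      - replace (1 - c^2) with ((1+c)*(1-c)) in HDc by ring.
        pose (p := - v * (1+c)).
        assert (Hp : p * (1-c) >= u^2/4) by (unfold p; lra).
        assert (0 < u^2) by (apply pow_lt; lra).
        assert (0 < p).
        { destruct (Rlt_or_le 0 p) as [G|G]; auto.
          assert (p * (1-c) <= 0) by (apply Rmult_le_0_r; lra). lra. }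
        assert (p * (1-c) <= p * 2) by (apply Rmult_le_compat_l; lra).
        assert (E2 : -8*(1+c)*v = 8 * p) by (unfold p; ring).
        rewrite E2. lra.
      - apply Rlt_le, Rinv_0_lt_compat. apply Rmult_lt_0_compat; [lra|]. nra. }
    assert (Hge : / U x0 - ln (1 + x0) / 8 >= / U x - ln (1 + x) / 8).
    { assert (0 <= (- U' c / U c ^ 2 - / (8 * (1 + c))) * (x0 - x)) by (apply Rmult_le_pos; lra). lra. }
    rewrite Hlnx in Hge.
    assert (0 < / U x).
    { apply Rinv_0_lt_compat. assert (U x0 <= U x) by (apply Hst; lra). lra. }
    assert (/ U x0 < / K) by (apply Rinv_lt_contravar; nra).
    assert (8 / K = 8 * / K) by (unfold Rdiv; ring).
    unfold T in Hge. lra.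
Qed.

Lemma abs_le_norm (a b : R) : 0 <= b -> Rabs a <= sqrt (a ^ 2 + b).
Proof.
  intros Hb. rewrite <- sqrt_Rsqr_abs. apply sqrt_le_1_alt.
  rewrite <- Rsqr_pow2. lra.
Qed.

Theorem lemma2p2 :
  forall A : R, 0 < A ->
  exists C : R,
    forall (c1 c2 c3 : R) (U U' : R -> R),
      norm3 c1 c2 c3 <= A ->
      C1_on_open_interval U U' ->
      (forall x, -1 < x < 1 ->
         (1 - x ^ 2) * U' x + 2 * x * U x + / 2 * (U x) ^ 2 = Pc c1 c2 c3 x) ->
      forall x, -1 < x < 1 -> Rabs (U x) <= C.
Proof.
  intros A HA. exists (8 + 5 * A).
  intros c1 c2 c3 U U' Hn HC Hode x Hx.
  unfold norm3 in Hn.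
  assert (B1 : Rabs c1 <= A).
  { eapply Rle_trans; [|exact Hn]. replace (c1 ^ 2 + c2 ^ 2 + c3 ^ 2) with (c1^2 + (c2^2 + c3^2)) by ring.
    apply abs_le_norm. nra. }
  assert (B2 : Rabs c2 <= A).
  { eapply Rle_trans; [|exact Hn]. replace (c1 ^ 2 + c2 ^ 2 + c3 ^ 2) with (c2^2 + (c1^2 + c3^2)) by ring.
    apply abs_le_norm. nra. }
  assert (B3 : Rabs c3 <= A).
  { eapply Rle_trans; [|exact Hn]. replace (c1 ^ 2 + c2 ^ 2 + c3 ^ 2) with (c3^2 + (c1^2 + c2^2)) by ring.
    apply abs_le_norm. nra. }
  assert (L1 : -A <= c1 <= A) by (split; [generalize (Rle_abs (-c1)); rewrite Rabs_Ropp|generalize (Rle_abs c1)]; lra).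
  assert (L2 : -A <= c2 <= A) by (split; [generalize (Rle_abs (-c2)); rewrite Rabs_Ropp|generalize (Rle_abs c2)]; lra).
  assert (L3 : -A <= c3 <= A) by (split; [generalize (Rle_abs (-c3)); rewrite Rabs_Ropp|generalize (Rle_abs c3)]; lra).
  assert (HP : forall y, -1 < y < 1 -> Pc c1 c2 c3 y <= 5 * A).
  { intros y Hy. unfold Pc.
    assert (c1 * (1 - y) <= A * (1 - y)) by (apply Rmult_le_compat_r; lra).
    assert (c2 * (1 + y) <= A * (1 + y)) by (apply Rmult_le_compat_r; lra).
    assert (0 <= 1 - y^2 <= 1) by (split; nra).
    assert (c3 * (1 - y^2) <= A * (1 - y^2)) by (apply Rmult_le_compat_r; lra).
    nra. }
  assert (Hd : forall y, -1 < y < 1 -> is_derive U y (U' y)) by (intros y Hy; apply (HC y Hy)).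
  assert (Up : U x <= 8 + 5 * A).
  { apply (upper_bound (5 * A) U U'); auto; try lra.
    intros y Hy. rewrite Hode by auto. auto. }
  assert (Lo : - U (- - x) <= 8 + 5 * A).
  { apply (upper_bound (5 * A) (fun y => - U (- y)) (fun y => U' (- y))); try lra.
    - intros y Hy.
      assert (H1 : is_derive (fun z => U (- z)) y (scal (-1) (U' (- y)))).
      { apply (is_derive_comp U (fun z => - z)). apply Hd; lra.
        auto_derive; auto. }
      apply is_derive_opp in H1.
      replace (U' (- y)) with (opp (scal (-1) (U' (- y)))). exact H1.
      unfold opp, scal; simpl. unfold mult; simpl. ring.
    - intros y Hy.
      replace ((1 - y ^ 2) * U' (- y) + 2 * y * - U (- y) + / 2 * (- U (- y)) ^ 2)
        with ((1 - (-y) ^ 2) * U' (- y) + 2 * (- y) * U (- y) + / 2 * (U (- y)) ^ 2) by ring.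
      rewrite Hode by lra. apply HP. lra. }
  rewrite Ropp_involutive in Lo.
  apply Rabs_le. lra.
Qed.
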